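(* Let $\Gamma$ be a symmetric multiset of even cardinality $N$, take $\tilde\Gamma=\Gamma$ (so $M=N$) and $p=0$, and let $k\ge 0$. Then the exponential pseudo-spline symbol $$a^{(k)}_{N,N,\Gamma}(z)=B^{(k)}_{N,\Gamma}(z)\,c^{(k)}_{N,\Gamma}(z)$$ is interpolatory, i.e. $$a^{(k)}_{N,N,\Gamma}(z)+a^{(k)}_{N,N,\Gamma}(-z)=2\quad\text{for all } z\neq0.$$
   Context: $\mathbb{R}^+$ denotes the positive reals, and $\lceil L\rceil:=\min\{m\in\mathbb{Z}:m\ge L\}$. Symmetric multiset: a multiset $\Gamma=\{\gamma_1,\dots,\gamma_N\}$ of complex numbers is symmetric if there exist distinct $\theta_1,\dots,\theta_q\in\mathbb{R}^+\cup\mathrm{i}[0,\pi)$ and positive integers $t_1,\dots,t_q$ such that: - $\Gamma$ consists of $\theta_j$ and $-\theta_j$, each with multiplicity $t_j$; - when $N$ is odd, $\Gamma$ contains one additional element $0$. Non-normalized symbol: $\tilde B^{(k)}_{L,\Lambda}(z):=z^{-\lceil L/2\rceil}\prod_{i=1}^L(e^{\lambda_i/2^{k+1}}z+1)$. Normalized symbol for $N$ even: fix one $\theta_j$ and set $B^{(k)}_{N,\Gamma}:=K^{(k)}\tilde B^{(k)}_{N,\Gamma}$ with $(K^{(k)})^{-1}=(e^{-\theta_j/2^{k+1}}+e^{\theta_j/2^{k+1}})\,\tilde B^{(k)}_{N-2,\Gamma'}(e^{\theta_j/2^{k+1}})$, where $\Gamma'$ is $\Gamma$ minus one copy each of $\pm\theta_j$.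 Let $\vartheta_1,\dots,\vartheta_n$ be the distinct values of $\Gamma$ with multiplicities $\tau_\ell$, and set $z_\ell=e^{-\vartheta_\ell/2^{k+1}}$. Then $c^{(k)}_{N,\Gamma}$ is the unique odd-symmetric Laurent polynomial ($c(z)=c(z^{-1})$) with coefficients supported in $[-N/2+1,N/2-1]$ satisfying $$c^{(s)}(z_\ell)=\sum_{i=0}^s\binom{s}{i}v_{\ell,i}\,G^{(s-i)}(z_\ell)\qquad(s=0,\dots,\tau_\ell-1),$$ where $G=1/B^{(k)}_{N,\Gamma}$ and $v_{\ell,i}=2\delta_{i,0}$ (the case $p=0$). *)

(* Defs.v *)
From Stdlib Require Import Reals Lra.
From Stdlib Require Import ClassicalEpsilon FunctionalExtensionality.
From HB Require Import structures.
From mathcomp Require Import all_boot all_order all_algebra.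

Set Implicit Arguments.
Unset Strict Implicit.
Unset Printing Implicit Defensive.

Record cplx := Cplx { Re : R; Im : R }.

Definition cplx_eqb (x y : cplx) : bool :=
  if Req_EM_T (Re x) (Re y) then
    if Req_EM_T (Im x) (Im y) then true else false
  else false.

Lemma cplx_eqP : Equality.axiom cplx_eqb.
Proof.
move=> [a b] [c d]; rewrite /cplx_eqb /=.
destruct (Req_EM_T a c) as [h1|h1]; last by constructor => -[].
destruct (Req_EM_T b d) as [h2|h2]; last by constructor => -[].
by constructor; rewrite h1 h2.
Qed.

HB.instance Definition _ := hasDecEq.Build cplx cplx_eqP.

Definition cplx_find (P : pred cplx) (n : nat) : option cplx :=
  match excluded_middle_informative (exists x, P x) with
  | left h => Some (proj1_sig (constructive_indefinite_description _ h))
  | right _ => None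
  end.

Lemma cplx_find_correct P n x : cplx_find P n = Some x -> P x.
Proof.
rewrite /cplx_find; case: excluded_middle_informative => // h [<-].
exact: proj2_sig (constructive_indefinite_description _ h).
Qed.

Lemma cplx_find_complete (P : pred cplx) :
  (exists x, P x) -> exists n, cplx_find P n.
Proof.
move=> h; exists 0%N; rewrite /cplx_find.
by case: excluded_middle_informative.
Qed.

Lemma cplx_find_ext (P Q : pred cplx) : P =1 Q -> cplx_find P =1 cplx_find Q.
Proof.
move=> hPQ n.
have -> : P = Q by apply: functional_extensionality.
by [].
Qed.

HB.instance Definition _ :=
  hasChoice.Build cplx cplx_find_correct cplx_find_complete cplx_find_ext.

Section CplxOps.
Local Open Scope R_scope.
Definition cadd (x y : cplx) := Cplx (Re x + Re y) (Im x + Im y).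
Definition copp (x : cplx) := Cplx (- Re x) (- Im x).
Definition czero := Cplx R0 R0.
Definition cone := Cplx R1 R0.
Definition cmul (x y : cplx) :=
  Cplx (Re x * Re y - Im x * Im y) (Re x * Im y + Im x * Re y).
Definition cinv (x : cplx) :=
  let n := (Re x * Re x + Im x * Im x) in
  Cplx (Re x / n) (- Im x / n).

Lemma cplx_ext (a b c d : R) : a = c -> b = d -> Cplx a b = Cplx c d.
Proof. by move=> -> ->. Qed.

Lemma caddA : associative cadd.
Proof. move=> [a b] [c d] [e f]; apply: cplx_ext => /=; ring. Qed.
Lemma caddC : commutative cadd.
Proof. move=> [a b] [c d]; apply: cplx_ext => /=; ring. Qed.
Lemma cadd0 : left_id czero cadd.
Proof. move=> [a b]; apply: cplx_ext => /=; ring. Qed.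
Lemma caddN : left_inverse czero copp cadd.
Proof. move=> [a b]; apply: cplx_ext => /=; ring. Qed.

HB.instance Definition _ := GRing.isZmodule.Build cplx caddA caddC cadd0 caddN.

Lemma cmulA : associative cmul.
Proof. move=> [a b] [c d] [e f]; apply: cplx_ext => /=; ring. Qed.
Lemma cmulC : commutative cmul.
Proof. move=> [a b] [c d]; apply: cplx_ext => /=; ring. Qed.
Lemma cmul1 : left_id cone cmul.
Proof. move=> [a b]; apply: cplx_ext => /=; ring. Qed.
Lemma cmulDl : left_distributive cmul cadd.
Proof. move=> [a b] [c d] [e f]; apply: cplx_ext => /=; ring. Qed.
Lemma cone_neq0 : (cone != czero)%B.
Proof. apply/eqP => -[] h; lra. Qed.

HB.instance Definition _ :=
  GRing.Zmodule_isComNzRing.Build cplx cmulA cmulC cmul1 cmulDl cone_neq0.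

Lemma cmulV (x : cplx) : x != czero -> cmul (cinv x) x = cone.
Proof.
case: x => a b /eqP hx.
have hn : (a * a + b * b <> 0).
  move=> h; apply: hx.
  have ha : a = 0 by nra.
  have hb : b = 0 by nra.
  by rewrite ha hb.
apply: cplx_ext => /=; field; exact: hn.
Qed.

Lemma cinv0 : cinv czero = czero.
Proof. apply: cplx_ext => /=; rewrite /Rdiv; ring. Qed.

End CplxOps.

HB.instance Definition _ := GRing.ComNzRing_isField.Build cplx cmulV cinv0.

Definition Cexp (x : cplx) : cplx :=
  Cplx (Rmult (exp (Re x)) (cos (Im x))) (Rmult (exp (Re x)) (sin (Im x))).

Local Open Scope ring_scope.

Definition admissible_theta (t : cplx) : Prop :=
  (Im t = R0 /\ Rlt 0 (Re t)) \/ (Re t = R0 /\ Rle 0 (Im t) /\ Rlt (Im t) PI).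

(* The symmetric multiset Gamma built from distinct thetas with
   multiplicities ts (N even case: no extra 0 element). *)
Definition sym_multiset (thetas : seq cplx) (ts : seq nat) : seq cplx :=
  flatten [seq nseq p.2 p.1 ++ nseq p.2 (- p.1) | p <- zip thetas ts].

Definition ek (k : nat) (l : cplx) : cplx := Cexp (l / (2 ^ k.+1)%:R).

Definition Btilde (k : nat) (Lam : seq cplx) (z : cplx) : cplx :=
  z ^- uphalf (size Lam) * \prod_(l <- Lam) (ek k l * z + 1).

Definition Bpoly (k : nat) (Lam : seq cplx) : {poly cplx} :=
  \prod_(l <- Lam) (ek k l *: 'X + 1).

Definition Knorm (k : nat) (Gam : seq cplx) (th : cplx) : cplx :=
  ((ek k (- th) + ek k th) * Btilde k (rem (- th) (rem th Gam)) (ek k th))^-1.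

(* s-th derivative of the rational function p/q, obtained by iterating the
   quotient rule; returns the pair (numerator, denominator). *)
Fixpoint rat_deriv (s : nat) (p q : {poly cplx}) : {poly cplx} * {poly cplx} :=
  match s with
  | 0 => (p, q)
  | s'.+1 => let pq := rat_deriv s' p q in
             (pq.1^`() * pq.2 - pq.1 * pq.2^`(), pq.2 ^+ 2)
  end.

Definition rat_deriv_at (s : nat) (p q : {poly cplx}) (z : cplx) : cplx :=
  (rat_deriv s p q).1.[z] / (rat_deriv s p q).2.[z].

(* Main.v *)
Require Import Defs.
From Stdlib Require Import Reals Lra Rpower.
From HB Require Import structures.
From mathcomp Require Import all_boot all_order all_algebra.
Import GRing.Theory.
Local Open Scope ring_scope.
From Stdlib Require Import Rpower.

Lemma natC n : (n%:R : cplx) = Cplx (INR n) R0.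
Proof. elim: n => [|n IH]; first by []. rewrite mulrS IH S_INR; apply: cplx_ext => /=; rewrite /GRing.one /=; ring. Qed.

Definition okIm (v : cplx) : Prop := Rlt (Ropp PI) (Im v) /\ Rlt (Im v) PI.

Lemma CexpD a b : Cexp (a + b) = Cexp a * Cexp b.
Proof.
case: a => a1 a2; case: b => b1 b2; rewrite /Cexp /=.
apply: cplx_ext; rewrite /= exp_plus ?cos_plus ?sin_plus; ring.
Qed.

Lemma Cexp0 : Cexp 0 = 1.
Proof. rewrite /Cexp /= exp_0 cos_0 sin_0; apply: cplx_ext; ring. Qed.

Lemma sin0_small (x : R) : Rlt (Ropp PI) x -> Rlt x PI -> sin x = R0 -> x = R0.
Proof.
move=> h1 h2 hs.
destruct (Rtotal_order x 0) as [hx|[hx|hx]] => //.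
- have : Rlt 0 (sin (Ropp x)) by apply: sin_gt_0; lra.
  rewrite sin_neg hs; lra.
- have : Rlt 0 (sin x) by apply: sin_gt_0; lra.
  rewrite hs; lra.
Qed.

Lemma Cexp_neqN1 w : okIm w -> Cexp w != -1.
Proof.
case: w => a b [h1 h2] /=; apply/eqP; rewrite /Cexp /= => -[e1 e2].
have hb : b = R0.
  apply: sin0_small => //.
  have := exp_pos a; move: e2; rewrite /GRing.opp /= => e2.
  move=> hp; apply: (Rmult_eq_reg_l (exp a)); last lra.
  by rewrite e2; ring.
move: e1; rewrite hb cos_0 /GRing.opp /= => e1.
have := exp_pos a; lra.
Qed.

Lemma Cexp_eq1 w : okIm w -> Cexp w = 1 -> w = 0.
Proof.
case: w => a b [h1 h2] /=; rewrite /Cexp /= => -[e1 e2].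
have hb : b = R0.
  apply: sin0_small => //.
  have := exp_pos a => hp; apply: (Rmult_eq_reg_l (exp a)); last lra.
  by rewrite e2; ring.
move: e1; rewrite hb cos_0 Rmult_1_r /GRing.one /= => e1.
have ha : a = R0 by apply: exp_inv; rewrite e1 exp_0.
by rewrite ha.
Qed.

Lemma Cexp_Re_pos w : Rlt (Ropp (PI/2)) (Im w) -> Rlt (Im w) (PI/2) -> Rlt R0 (Re (Cexp w)).
Proof.
move=> h1 h2; rewrite /Cexp /=; apply: Rmult_lt_0_compat; first exact: exp_pos.
by apply: cos_gt_0.
Qed.

Section EK.
Variable k : nat.
Let d := INR (2 ^ k.+1).
Lemma d_ge2 : Rle (INR 2) d.
Proof.
rewrite /d.
apply: le_INR; apply/leP.
by rewrite expnS leq_pmulr // expn_gt0.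
Qed.

Lemma Im_divD w : Im (w / (2 ^ k.+1)%:R) = Rdiv (Im w) d.
Proof.
rewrite natC; case: w => a b /=; rewrite -/d.
have := d_ge2 => hd; rewrite /= in hd.
rewrite /GRing.inv /GRing.mul /=.
field; lra.
Qed.
End EK.

Lemma div_bound (a b d : R) : Rle (INR 2) d -> Rlt (Ropp b) a -> Rlt a b ->
  Rlt (Ropp (Rdiv b 2)) (Rdiv a d) /\ Rlt (Rdiv a d) (Rdiv b 2).
Proof.
rewrite /= => hd h1 h2.
have he : Rlt 0 (Rinv d) by apply: Rinv_0_lt_compat; lra.
have hed : Rmult (Rinv d) d = R1 by field; lra.
rewrite /Rdiv.
split; nra.
Qed.

Section EK2.
Variable k : nat.
Local Notation D := ((2 ^ k.+1)%:R : cplx).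

Lemma ekD x y : ek k x * ek k y = ek k (x + y).
Proof. by rewrite /ek mulrDl CexpD. Qed.

Lemma ekN x : ek k (- x) * ek k x = 1.
Proof. by rewrite ekD addNr /ek mul0r Cexp0. Qed.

Lemma ek_Im_half x : okIm x -> Rlt (Ropp (Rdiv PI 2)) (Im (x / D)) /\ Rlt (Im (x / D)) (Rdiv PI 2).
Proof. move=> [h1 h2]; rewrite Im_divD; apply: div_bound => //; exact: d_ge2. Qed.

Lemma okIm_sum_div x y : okIm x -> okIm y -> okIm ((x + y) / D).
Proof.
move=> [h1 h2] [h3 h4]; rewrite /okIm Im_divD /=.
have := d_ge2 k => hd.
have := @div_bound (Rplus (Im x) (Im y)) (Rmult 2 PI) _ hd.
rewrite /Rdiv => H; have [] := H; try lra.
Qed.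

Lemma ek_Re_pos x : okIm x -> Rlt R0 (Re (ek k x)).
Proof. by move=> /ek_Im_half [h1 h2]; apply: Cexp_Re_pos. Qed.

Lemma ek_neq0 x : okIm x -> ek k x != 0.
Proof. move=> /ek_Re_pos h; apply/eqP => e; rewrite e /= in h; lra. Qed.

Lemma ek_mul1 x y : okIm x -> okIm y -> ek k x * ek k y + 1 != 0.
Proof.
move=> hx hy; rewrite ekD /ek; apply/eqP => e.
have : Cexp ((x + y) / D) = -1 by apply/eqP; rewrite -subr_eq0 opprK e.
by move/eqP; rewrite (negPf (Cexp_neqN1 _ (@okIm_sum_div _ _ hx hy))).
Qed.

Lemma ek_negN x y : okIm x -> okIm y -> ek k x != - ek k y.
Proof.
move=> /ek_Re_pos hx /ek_Re_pos hy; apply/eqP => e.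
have ReN : Re (- ek k y) = Ropp (Re (ek k y)) by []. rewrite e ReN in hx; lra.
Qed.

Lemma okImN x : okIm x -> okIm (- x).
Proof. by case=> h1 h2; rewrite /okIm /=; split; lra. Qed.

Lemma ek_inj x y : okIm x -> okIm y -> ek k x = ek k y -> x = y.
Proof.
move=> hx hy e.
have : ek k x * ek k (- y) = 1 by rewrite e mulrC ekN.
rewrite ekD /ek => /(Cexp_eq1 _ (@okIm_sum_div _ _ hx (okImN _ hy))).
move/eqP; rewrite mulf_eq0 invr_eq0 natC subr_eq0 => /orP [/eqP //|].
move/eqP => -[]; have := d_ge2 k; rewrite /=; lra.
Qed.
End EK2.

From mathcomp Require Import ring zify.
Definition dd (a : {poly cplx} * {poly cplx}) : {poly cplx} * {poly cplx} :=
  (a.1^`() * a.2 - a.1 * a.2^`(), a.2 ^+ 2).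
Definition eqv (a b : {poly cplx} * {poly cplx}) := a.1 * b.2 = b.1 * a.2.
Definition padd (a b : {poly cplx} * {poly cplx}) : {poly cplx} * {poly cplx} :=
  (a.1 * b.2 + b.1 * a.2, a.2 * b.2).

Lemma rd_succ s p q : rat_deriv s.+1 p q = dd (rat_deriv s p q).
Proof. by []. Qed.

Lemma rd_shift s p q : rat_deriv s.+1 p q = rat_deriv s (dd (p, q)).1 (dd (p, q)).2.
Proof. elim: s => [|s IH] //; by rewrite rd_succ IH. Qed.

Lemma rd_den s p q : (rat_deriv s p q).2 = q ^+ (2 ^ s).
Proof. elim: s => [|s IH] //=; by rewrite IH -exprM expnS mulnC. Qed.

Lemma rd_scale s a p q :
  rat_deriv s (a *: p) q = (a *: (rat_deriv s p q).1, (rat_deriv s p q).2).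
Proof.
elim: s => [|s IH] //; rewrite rd_succ IH /dd /= derivZ.
by rewrite scalerBr -!scalerAl.
Qed.

Lemma dd_eqv a b : eqv a b -> eqv (dd a) (dd b).
Proof.
case: a b => [a1 a2] [b1 b2]; rewrite /eqv /dd /= => E.
have E' : a1^`() * b2 + a1 * b2^`() = b1^`() * a2 + b1 * a2^`().
  by rewrite -!derivM E.
apply/eqP; rewrite -subr_eq0; apply/eqP.
transitivity (a2 * b2 * ((a1^`() * b2 + a1 * b2^`()) - (b1^`() * a2 + b1 * a2^`()))
   - (a1 * b2 - b1 * a2) * (a2^`() * b2 + b2^`() * a2)).
  ring.
by rewrite E' E !subrr mulr0 mul0r subrr.
Qed.

Lemma dd_add a b : dd (padd a b) = padd (dd a) (dd b).
Proof.
case: a b => [a1 a2] [b1 b2]; rewrite /dd /padd /=.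
congr pair; last by ring.
rewrite !derivD !derivM; ring.
Qed.

Lemma rd_add s p1 q1 p2 q2 :
  eqv (rat_deriv s (p1 * q2 + p2 * q1) (q1 * q2))
      (padd (rat_deriv s p1 q1) (rat_deriv s p2 q2)).
Proof.
elim: s => [|s IH]; first by rewrite /eqv /=.
by rewrite !rd_succ -dd_add; apply: dd_eqv.
Qed.


Lemma natC_neq0 n : (n.+1%:R : cplx) != 0.
Proof. rewrite natC; apply/eqP => -[] h; have h2 : INR n.+1 = R0 by []. have := lt_0_INR n.+1 (Nat.lt_0_succ n). rewrite h2. change R0 with (IZR 0). lra. Qed.

Lemma eqv_eval a b z : eqv a b -> a.2.[z] != 0 -> b.2.[z] != 0 ->
  a.1.[z] / a.2.[z] = b.1.[z] / b.2.[z].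
Proof.
move=> E ha hb; have := congr1 (fun p => p.[z]) E; rewrite /= !hornerM => E'.
apply: (mulIf ha); rewrite divfK //; apply: (mulIf hb).
by rewrite E' mulrAC divfK.
Qed.

Lemma rd_den_eval s p q z : q.[z] != 0 -> (rat_deriv s p q).2.[z] != 0.
Proof. by move=> hq; rewrite rd_den horner_exp expf_neq0. Qed.

Lemma rda_comb s p1 q1 p2 q2 z : q1.[z] != 0 -> q2.[z] != 0 ->
  rat_deriv_at s (p1 * q2 + p2 * q1) (q1 * q2) z =
  rat_deriv_at s p1 q1 z + rat_deriv_at s p2 q2 z.
Proof.
move=> h1 h2; rewrite /rat_deriv_at.
have h12 : (q1 * q2).[z] != 0 by rewrite hornerM mulf_neq0.
rewrite (@eqv_eval _ _ z (rd_add s p1 q1 p2 q2)) ?rd_den_eval //; last first.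
  by rewrite /padd /= hornerM mulf_neq0 // rd_den_eval.
rewrite /padd /= hornerD !hornerM.
have a1 := @rd_den_eval s p1 _ _ h1; have a2 := @rd_den_eval s p2 _ _ h2.
by field; rewrite a1 a2.
Qed.

Lemma key_div t : forall (h q : {poly cplx}) z, q.[z] != 0 ->
  (forall s, (s < t)%N -> rat_deriv_at s h q z = 0) -> ('X - z%:P) ^+ t %| h.
Proof.
elim: t => [|t IH] h q z hq hs; first by rewrite expr0 dvd1p.
have Hh : ('X - z%:P) ^+ t %| h by apply: (IH h q z hq) => s hst; apply: hs; apply: ltnW.
have Hd : ('X - z%:P) ^+ t %| (dd (h, q)).1.
  apply: (IH _ (dd (h, q)).2 z); first by rewrite /= horner_exp expf_neq0.
  move=> s hst; rewrite /rat_deriv_at -rd_shift; exact: hs.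
case: t IH hs Hh Hd => [|n] IH hs Hh Hd.
  rewrite expr1 dvdp_XsubCl /root.
  have := hs 0%N isT; rewrite /rat_deriv_at /= => e.
  by apply/eqP; apply: (mulIf (invr_neq0 hq)); rewrite mul0r.
case/dvdpP: Hh => g hg.
set L := 'X - z%:P in hg Hd *.
set E := L ^+ n.
pose A := (g^`() * L + g * (n.+1)%:R%:P) * q - g * L * q^`().
have hdA : (dd (h, q)).1 = E * A.
  rewrite /= hg derivM deriv_exp derivXsubC /= -mulr_natr exprS mul1r /A /E.
  rewrite -polyC_natr /=; ring.
move: Hd; rewrite hdA exprS mulrC dvdp_mul2l; last by rewrite expf_neq0 // polyXsubC_eq0.
rewrite dvdp_XsubCl /root /A !hornerE /= subrr !mulr0 !mul0r add0r subr0.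
rewrite !mulf_eq0 (negPf hq) orbF (negPf (natC_neq0 n)) orbF.
move=> gz; have /dvdpP [g1 hg1] : L %| g by rewrite /L dvdp_XsubCl.
rewrite hg hg1 exprS -mulrA mulrC; apply: dvdp_mull.
by rewrite mulrC exprS dvdpp.
Qed.

Lemma adm_okIm t : admissible_theta t -> okIm t.
Proof.
have hpi := PI_RGT_0.
case=> [[h1 h2]|[h1 [h2 h3]]]; rewrite /okIm; [rewrite h1|]; split; change R0 with (IZR 0) in *; lra.
Qed.

Lemma sym_cons t th n ts :
  sym_multiset (t :: th) (n :: ts) = nseq n t ++ nseq n (- t) ++ sym_multiset th ts.
Proof. by rewrite /sym_multiset /= catA. Qed.

Lemma okIm_sym thetas ts v : (forall t, t \in thetas -> okIm t) ->
  v \in sym_multiset thetas ts -> okIm v.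
Proof.
elim: thetas ts => [|t th IH] [|n ts] //= hok.
rewrite sym_cons !mem_cat !mem_nseq => /orP [/andP [_ /eqP ->]|/orP [/andP [_ /eqP ->]|hv]].
- by apply: hok; rewrite inE eqxx.
- by apply: okImN; apply: hok; rewrite inE eqxx.
- by apply: (IH ts) => // x hx; apply: hok; rewrite inE hx orbT.
Qed.

Lemma size_sym thetas ts : size ts = size thetas ->
  size (sym_multiset thetas ts) = (sumn ts).*2.
Proof.
elim: thetas ts => [|t th IH] [|n ts] hs; try by [].
rewrite sym_cons !size_cat !size_nseq IH; last by case: hs.
by rewrite /= addnA addnn doubleD.
Qed.

Lemma Bpoly_cons k l s : Bpoly k (l :: s) = (ek k l *: 'X + 1) * Bpoly k s.
Proof. by rewrite /Bpoly big_cons. Qed.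

Lemma size_Bpoly k s : (size (Bpoly k s) <= (size s).+1)%N.
Proof.
elim: s => [|l s IH]; first by rewrite /Bpoly big_nil size_poly1.
rewrite Bpoly_cons (leq_trans (size_polyMleq _ _)) //.
have h2 : (size ((ek k l *: 'X + 1)%R : {poly cplx}) <= 2)%N.
  rewrite (leq_trans (size_polyD _ _)) // geq_max size_poly1 andbT.
  by rewrite (leq_trans (size_scale_leq _ _)) // size_polyX.
have := leq_add h2 IH; rewrite /= => h; lia.
Qed.

Lemma horner_Bpoly k s z : (Bpoly k s).[z] = \prod_(l <- s) (ek k l * z + 1).
Proof. rewrite /Bpoly horner_prod; apply: eq_bigr => l _; by rewrite !hornerE. Qed.

Lemma dvd_Bpoly_comp k s v :
  ('X - (ek k (- v))%:P) ^+ (count_mem v s) %| (Bpoly k s \Po - 'X).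
Proof.
elim: s => [|l s IH]; first by rewrite expr0 dvd1p.
rewrite Bpoly_cons comp_polyM /=.
case: (eqVneq l v) => [->|hlv].
  rewrite ?eqxx /= ?add1n exprS; apply: dvdp_mul => //.
  rewrite dvdp_XsubCl /root horner_comp !hornerE mulrN.
  by rewrite mulrC ekN addNr.
by rewrite ?(negPf hlv) /= ?add0n; apply: dvdp_mull.
Qed.

Lemma prod_dvd (u : seq cplx) (m : cplx -> nat) p : uniq u ->
  (forall x, x \in u -> ('X - x%:P) ^+ m x %| p) ->
  \prod_(x <- u) ('X - x%:P) ^+ m x %| p.
Proof.
elim: u => [|x u IH]; first by rewrite big_nil dvd1p.
rewrite /= => /andP [hx hu] hd; rewrite big_cons Gauss_dvdp.
  by rewrite hd ?inE ?eqxx // IH // => y hy; apply: hd; rewrite inE hy orbT.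
apply: coprimep_expl; rewrite coprimep_sym coprimep_XsubC /root horner_prod.
rewrite prodf_seq_neq0; apply/allP => y hy /=.
rewrite horner_exp hornerXsubC expf_neq0 // subr_eq0.
by apply: contraNneq hx => ->.
Qed.
Lemma sign_odd (R : comNzRingType) (x : R) m :
  (- x) ^+ m.+1 * (- x) ^+ m = - (x ^+ m.+1 * x ^+ m).
Proof. by rewrite !exprS -!mulrA -!exprMn mulrNN mulNr. Qed.

Lemma compNN (p : {poly cplx}) : (p \Po - 'X) \Po - 'X = p.
Proof.
have hXX : (- 'X) \Po (- 'X) = 'X :> {poly cplx}.
  by rewrite -scaleN1r comp_polyZ comp_polyX scalerA mulrNN mulr1 scale1r.
by rewrite -comp_polyA hXX comp_polyXr.
Qed.

Lemma size_arith (N m sc sKP sT1 sT2 shp sT3 sT5 sT4 sT6 sP sD : nat) :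
  (sc <= N.-1)%N -> (sP <= N.+1)%N -> (sKP <= N.+1)%N ->
  (sT1 <= (sc + sKP).-1)%N -> (sT2 <= (m.+2 + m.+1).-1)%N ->
  (shp <= maxn sT1 sT2)%N -> (sT3 <= (sT5 + sT4).-1)%N ->
  (sT5 <= sP.-1.+1)%N -> (sT6 <= sc.-1.+1)%N -> (sT4 <= sT6)%N ->
  (sD <= maxn shp sT3)%N -> N = (m.+1 + m.+1)%N -> (N + N < sD)%N -> False.
Proof. move=> *; lia. Qed.
Theorem mainTheorem9
  (thetas : seq cplx) (ts : seq nat) (j : nat) (k : nat) (c : {poly cplx}) :
  uniq thetas ->
  (forall t, t \in thetas -> admissible_theta t) ->
  size ts = size thetas ->
  all (fun t => (0 < t)%N) ts ->
  (j < size thetas)%N ->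
  let Gam := sym_multiset thetas ts in
  let N := size Gam in
  let th := nth 0 thetas j in
  let K := Knorm k Gam th in
  (size c <= N.-1)%N ->
  let cfun := fun z : cplx => c.[z] * z ^- (N./2).-1 in
  (forall z : cplx, z != 0 -> cfun z = cfun z^-1) ->
  (forall (vt : cplx) (s : nat), vt \in Gam -> (s < count_mem vt Gam)%N ->
     rat_deriv_at s c 'X^((N./2).-1) (ek k (- vt)) =
     \sum_(i < s.+1) 'C(s, i)%:R * (2 * ((i : nat) == 0%N)%:R) *
        rat_deriv_at (s - i) 'X^(uphalf N) (K *: Bpoly k Gam) (ek k (- vt))) ->
  let a := fun z : cplx => K * Btilde k Gam z * cfun z in
  forall z : cplx, z != 0 -> a z + a (- z) = 2.
Proof.
move=> huniq hadm hsz hpos hj Gam N th K hc cfun _ hH a z hz.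
have okG : forall v, v \in Gam -> okIm v.
  move=> v hv; apply: (okIm_sym thetas ts v) => // t ht; apply: adm_okIm; exact: hadm.
have okth : okIm th by apply: adm_okIm; apply: hadm; apply: mem_nth.
have hN : N = (sumn ts).*2 by apply: size_sym.
have [m hm] : exists m, sumn ts = m.+1.
  case: ts hsz hpos {hH hN Gam N K a cfun hc th okth okG} => [|t0 ts'] hsz hpos.
    by move: hj; rewrite -hsz.
  move: hpos => /= /andP [ht0 _]; exists (t0 + sumn ts').-1.
  by rewrite prednK // addn_gt0 ht0.
rewrite hm in hN.
have e1 : (N./2).-1 = m by rewrite hN doubleK.
have e2 : uphalf N = m.+1 by rewrite hN uphalf_double.
rewrite e1 e2 in hH.
rewrite /cfun e1 in a *.

have hK : K != 0.
  rewrite /K /Knorm invr_eq0 mulf_neq0 //.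
    have -> : ek k (- th) + ek k th = ek k (- th) * (ek k th * ek k th + 1).
      by rewrite mulrDr mulr1 mulrA ekN mul1r addrC.
    by rewrite mulf_neq0 // ?ek_neq0 ?ek_mul1 //; apply: okImN.
  rewrite /Btilde mulf_neq0 // ?invr_neq0 ?expf_neq0 ?ek_neq0 //.
  rewrite prodf_seq_neq0; apply/allP => l hl /=.
  apply: ek_mul1 => //; apply: okG; exact: (mem_rem (mem_rem hl)).
pose P := Bpoly k Gam.
pose hpol := c * (K *: P) + ((-2) *: 'X^(m.+1)) * 'X^m.
have hPz : forall v, v \in Gam -> P.[ek k (- v)] != 0.
  move=> v hv; rewrite /P horner_Bpoly prodf_seq_neq0; apply/allP => l hl /=.
  by apply: ek_mul1; [apply: okG | apply: okImN; apply: okG].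
have Hdiv1 : forall v, v \in Gam -> ('X - (ek k (- v))%:P) ^+ count_mem v Gam %| hpol.
  move=> v hv.
  have hz1 : ('X^m : {poly cplx}).[ek k (- v)] != 0.
    by rewrite hornerXn expf_neq0 // ek_neq0 //; apply: okImN; apply: okG.
  have hz2 : (K *: P).[ek k (- v)] != 0 by rewrite hornerZ mulf_neq0 // hPz.
  apply: (key_div _ _ ('X^m * (K *: P))).
    by rewrite hornerM mulf_neq0.
  move=> s hs; rewrite /hpol rda_comb //.
  rewrite /rat_deriv_at rd_scale /= hornerZ -mulrA -/(rat_deriv_at _ _ _ _).
  rewrite (hH v s hv hs) big_ord_recl big1 => [|i _]; last first.
    by rewrite /= mulr0 mulr0 mul0r.
  by rewrite /= bin0 subn0 mulr1 mul1r addr0 mulNr addrN.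

pose Dp := hpol - (P \Po - 'X) * (K *: (c \Po - 'X)).
have Hdv : forall v, v \in Gam -> ('X - (ek k (- v))%:P) ^+ count_mem v Gam %| Dp.
  move=> v hv; rewrite /Dp dvdp_sub ?Hdiv1 //.
  by apply: dvdp_mulr; apply: dvd_Bpoly_comp.
have Dodd : Dp \Po - 'X = - Dp.
  rewrite /Dp /hpol !comp_polyB !comp_polyD !comp_polyM !comp_polyZ !compNN.
  rewrite !comp_Xn_poly -!mul_polyC.
  have hs := @sign_odd _ ('X : {poly cplx}) m.
  rewrite -(mulrA (-2)%:P) hs; ring.

have Hdv2 : forall v, v \in Gam -> ('X - (- ek k (- v))%:P) ^+ count_mem v Gam %| Dp.
  move=> v hv; have /dvdpP [g hg] := Hdv v hv.
  apply/dvdpP; exists (- ((g \Po - 'X) * (-1) ^+ count_mem v Gam)).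
  rewrite -[Dp]opprK -Dodd hg comp_polyM rmorphXn /= comp_polyB comp_polyX comp_polyC.
  rewrite polyCN opprK -opprD -(mulN1r ('X + _)) exprMn mulrA mulNr.
  by rewrite addrC.
pose zs := [seq ek k (- v) | v <- Gam] ++ [seq - ek k (- v) | v <- Gam].
have Hall : \prod_(x <- zs) ('X - x%:P) %| Dp.
  rewrite -prodr_undup_exp_count; apply: prod_dvd; first exact: undup_uniq.
  move=> x; rewrite mem_undup mem_cat => /orP [] /mapP [v hv ->].
    rewrite count_cat !count_map.
    have -> : count (preim (fun v0 => - ek k (- v0)) (pred1 (ek k (- v)))) Gam = 0%N.
      rewrite (eq_in_count (a2 := pred0)) ?count_pred0 // => l hl /=.
      apply/negbTE; rewrite eq_sym; apply: ek_negN; apply: okImN; exact: okG.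
    rewrite addn0 (eq_in_count (a2 := pred1 v)); first exact: Hdv.
    move=> l hl /=; apply/eqP/eqP => [e|->] //.
    by rewrite -[l]opprK -[v]opprK; congr (- _); exact: (@ek_inj k _ _ (okImN _ (okG _ hl)) (okImN _ (okG _ hv)) e).
  rewrite count_cat !count_map.
  have -> : count (preim (fun v0 => ek k (- v0)) (pred1 (- ek k (- v)))) Gam = 0%N.
    rewrite (eq_in_count (a2 := pred0)) ?count_pred0 // => l hl /=.
    apply/negbTE; apply: ek_negN; apply: okImN; exact: okG.
  rewrite add0n (eq_in_count (a2 := pred1 v)); first exact: Hdv2.
  move=> l hl /=; apply/eqP/eqP => [e|->] //.
  move/oppr_inj: e => e.
  by rewrite -[l]opprK -[v]opprK; congr (- _); exact: (@ek_inj k _ _ (okImN _ (okG _ hl)) (okImN _ (okG _ hv)) e).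

have scomp : forall p : {poly cplx}, (size (p \Po - 'X) <= (size p).-1.+1)%N.
  move=> p; apply: (leq_trans (size_comp_poly_leq _ _)).
  by rewrite size_polyN size_polyX muln1.
have hDp0 : Dp = 0.
  apply/eqP; apply: contraT => hD.
  have := dvdp_leq hD Hall; rewrite size_prod_XsubC size_cat !size_map -/N.
  have sP : (size P <= N.+1)%N := size_Bpoly k Gam.
  have sKP : (size (K *: P) <= N.+1)%N := leq_trans (size_scale_leq _ _) sP.
  pose T1 := c * (K *: P). pose T2 := (-2) *: 'X^(m.+1) * 'X^m : {poly cplx}.
  pose T3 := (P \Po - 'X) * (K *: (c \Po - 'X)). pose T4 := K *: (c \Po - 'X).
  pose T5 := P \Po - 'X. pose T6 := c \Po - 'X.
  have s1 : (size T1 <= (size c + size (K *: P)).-1)%N := size_polyMleq _ _.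
  have s2 : (size T2 <= (m.+2 + m.+1).-1)%N.
    apply: (leq_trans (size_polyMleq _ _)).
    have := size_scale_leq (-2) ('X^(m.+1) : {poly cplx}).
    rewrite !size_polyXn => h; by rewrite -!subn1 leq_sub2r // leq_add2r.
  have s3 : (size hpol <= maxn (size T1) (size T2))%N by exact: size_polyD.
  have s4 : (size T3 <= (size T5 + size T4).-1)%N := size_polyMleq _ _.
  have s5 : (size T5 <= (size P).-1.+1)%N := scomp P.
  have s6 : (size T6 <= (size c).-1.+1)%N := scomp c.
  have s7 : (size T4 <= size T6)%N := size_scale_leq _ _.
  have s8 : (size Dp <= maxn (size hpol) (size T3))%N.
    by rewrite /Dp (leq_trans (size_polyD _ _)) // size_polyN.
  have hN2 : N = (m.+1 + m.+1)%N by rewrite hN addnn.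
  clear -hN2 hc s1 s2 s3 s4 s5 s6 s7 s8 sP sKP.
  move=> h; exfalso; exact: (@size_arith _ _ _ _ _ _ _ _ _ _ _ _ _ hc sP sKP s1 s2 s3 s4 s5 s6 s7 s8 hN2 h).
have hB : forall w, Btilde k Gam w = (w ^+ m.+1)^-1 * P.[w].
  by move=> w; rewrite /Btilde -/N e2 horner_Bpoly.
rewrite !hB.
have hD := congr1 (fun p => p.[z]) hDp0.
rewrite /= /Dp /hpol !(hornerD, hornerN, hornerM, hornerZ, horner_comp, hornerXn, hornerX, horner0) in hD.
have hs := @sign_odd _ z m.
move: hD hs.
set A := c.[z]; set B := P.[z]; set C := c.[- z]; set D := P.[- z].
set u := z ^+ m.+1; set w := z ^+ m; set u' := (- z) ^+ m.+1; set w' := (- z) ^+ m.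
move=> hD hs.
have hu : u != 0 by rewrite expf_neq0.
have hw : w != 0 by rewrite expf_neq0.
have hu' : u' != 0 by rewrite expf_neq0 // oppr_eq0.
have hw' : w' != 0 by rewrite expf_neq0 // oppr_eq0.
have E : K * B * A - K * D * C = 2 * (u * w).
  apply/eqP; rewrite -subr_eq0; apply/eqP.
  rewrite -[RHS]hD; ring.
transitivity ((K * B * A) / (u * w) + (K * D * C) / (u' * w')).
  by field; rewrite ?hu ?hw ?hu' ?hw' ?oppr_eq0 ?mulf_neq0.
rewrite hs.
transitivity ((K * B * A - K * D * C) / (u * w)).
  by field; rewrite ?hu ?hw ?oppr_eq0 ?mulf_neq0.
by rewrite E; field; rewrite ?hu ?hw ?oppr_eq0 ?mulf_neq0.
Qed.
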